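(* Let $n\in\mathbb N$ and $0<\varepsilon,\gamma<1$. Let $H$ be a $3$-graph of order $n$ with $\delta_2(H)\ge(1/2-\gamma)n$. Let $v\in V(H)$ and suppose there are at least $\varepsilon n^3$ edges $e\in E(H)$ such that $v\in L(e)$. Then $|\tilde N_{1,\gamma\varepsilon}(v)|\ge(1/4-3\gamma)n$.
   Context: $\delta_2(H)$ is the minimum over pairs of distinct vertices of the number of edges containing the pair. $K_4^-$ is the $3$-graph with $4$ vertices and $3$ edges. For a $3$-set $T$, $L(T)$ is the set of vertices $u$ such that $H[T\cup\{u\}]$ contains a copy of $K_4^-$. For $c\in\mathbb N$, a set $S$ is an $(x,y)$-connector of length $c$ if $S\cap\{x,y\}=\emptyset$, $|S|=4c-1$, and both $H[S\cup\{x\}]$, $H[S\cup\{y\}]$ contain $K_4^-$-factors (vertex-disjoint copies covering all vertices). $x,y$ are $(c,\eta)$-close if there are at least $\eta n^{4c-1}$ $(x,y)$-connectors of length $c$ in $H$. $\tilde N_{c,\eta}(x)$ is the set of vertices $(c,\eta)$-close to $x$. *)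

(* Defs.v *)
From HB Require Import structures.
From mathcomp Require Import all_boot all_order all_algebra.
Set Implicit Arguments. Unset Strict Implicit. Unset Printing Implicit Defensive.
Import Order.TTheory GRing.Theory Num.Theory.

Definition is_3graph (V : finType) (E : {set {set V}}) : Prop :=
  forall e, e \in E -> #|e| = 3.

Definition codeg (V : finType) (E : {set {set V}}) (x y : V) : nat :=
  #|[set e in E | (x \in e) && (y \in e)]|.

Definition hasK4m (V : finType) (E : {set {set V}}) (W : {set V}) : bool :=
  [exists a : V, exists b : V, exists c : V, exists d : V,
    [&& [&& a \in W, b \in W, c \in W & d \in W],
        uniq [:: a; b; c; d],
        [set a; b; c] \in E, [set a; b; d] \in E & [set a; c; d] \in E]].

Definition Lset (V : finType) (E : {set {set V}}) (T : {set V}) : {set V} :=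
  [set u | hasK4m E (u |: T)].

Definition K4m_factor (V : finType) (E : {set {set V}}) (W : {set V}) : bool :=
  [exists P : {set {set V}},
    partition P W && [forall B in P, (#|B| == 4) && hasK4m E B]].

Definition connector (V : finType) (E : {set {set V}}) (c : nat) (x y : V)
    (S : {set V}) : bool :=
  [&& x \notin S, y \notin S, #|S| == (4 * c).-1,
      K4m_factor E (x |: S) & K4m_factor E (y |: S)].

Definition close (R : realFieldType) (V : finType) (E : {set {set V}})
    (c : nat) (eta : R) (x y : V) : bool :=
  (eta * (#|V|%:R) ^+ (4 * c)%N.-1 <=
     (#|[set S : {set V} | connector E c x y S]|%:R : R))%R.

Definition closeN (R : realFieldType) (V : finType) (E : {set {set V}})
    (c : nat) (eta : R) (x : V) : {set V} :=
  [set y | close E c eta x y].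

(* Main.v *)
Require Import Defs.
From HB Require Import structures.
From mathcomp Require Import all_boot all_order all_algebra.
Import Order.TTheory GRing.Theory Num.Theory.
From mathcomp Require Import lra zify.
Set Implicit Arguments. Unset Strict Implicit.


Lemma card_sumb (V : finType) (A : {set V}) : #|A| = \sum_(u : V) (u \in A : nat).
Proof.
rewrite -sum1_card big_mkcond /=; apply: eq_bigr => u _; by case: (u \in A).
Qed.

Lemma dcount (V : finType) (T : {set {set V}}) (L : {set V} -> {set V}) :
  \sum_(e in T) #|L e| = \sum_(y : V) #|[set e in T | y \in L e]|.
Proof.
under eq_bigr do rewrite card_sumb.
rewrite exchange_big /=; apply: eq_bigr => y _.
rewrite card_sumb [RHS]big_mkcond /= [LHS]big_mkcond /=.
apply: eq_bigr => e _; rewrite !inE; by case: (e \in T).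
Qed.

Lemma hasK4m_card (V : finType) (E : {set {set V}}) (W : {set V}) : hasK4m E W -> 4 <= #|W|.
Proof.
case/existsP=> a /existsP[b /existsP[c /existsP[d /and5P[/and4P[Ha Hb Hc Hd] U _ _ _]]]].
have <- : #|[:: a; b; c; d]| = 4 by move/card_uniqP: U.
apply: subset_leq_card; apply/subsetP=> x; rewrite !inE.
by case/or4P=> /eqP->.
Qed.

Lemma K4m_factor1 (V : finType) (E : {set {set V}}) (W : {set V}) :
  #|W| = 4 -> hasK4m E W -> K4m_factor E W.
Proof.
move=> HW HK; apply/existsP; exists [set W]; apply/andP; split.
  rewrite /partition cover1 eqxx trivIset1 /= inE.
  apply/negP=> /eqP W0; move: HW; by rewrite -W0 cards0.
apply/forallP=> B; apply/implyP; rewrite inE => /eqP->; by rewrite HW eqxx.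
Qed.

Lemma Lset_notin (V : finType) (E : {set {set V}}) (e : {set V}) u :
  #|e| = 3 -> u \in Lset E e -> (u \notin e) /\ #|u |: e| = 4.
Proof.
rewrite inE => He /hasK4m_card; rewrite cardsU1 He.
case: (u \in e) => //=.
Qed.

Lemma connector_of (V : finType) (E : {set {set V}}) (e : {set V}) v y :
  #|e| = 3 -> v \in Lset E e -> y \in Lset E e -> connector E 1 v y e.
Proof.
move=> He Hv Hy.
have [nv cv] := Lset_notin He Hv; have [ny cy] := Lset_notin He Hy.
move: Hv Hy; rewrite !inE => Hv Hy.
by rewrite /connector nv ny He eqxx !K4m_factor1.
Qed.

Lemma set3_213 (V : finType) (x y z : V) : [set y; x; z] = [set x; y; z].
Proof. by apply/setP=> t; rewrite !inE; case: (t == x); case: (t == y); case: (t == z). Qed.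
Lemma set3_312 (V : finType) (x y z : V) : [set z; x; y] = [set x; y; z].
Proof. by apply/setP=> t; rewrite !inE; case: (t == x); case: (t == y); case: (t == z). Qed.
Lemma set3_132 (V : finType) (x y z : V) : [set x; z; y] = [set x; y; z].
Proof. by apply/setP=> t; rewrite !inE; case: (t == x); case: (t == y); case: (t == z). Qed.

Lemma mkK4 (V : finType) (E : {set {set V}}) (W : {set V}) x y z w :
  x \in W -> y \in W -> z \in W -> w \in W -> uniq [:: x; y; z; w] ->
  [set x; y; z] \in E -> [set x; y; w] \in E -> [set x; z; w] \in E -> hasK4m E W.
Proof.
move=> *; apply/existsP; exists x; apply/existsP; exists y; apply/existsP; exists z;
apply/existsP; exists w; by apply/and5P; split=> //; apply/and4P.
Qed.

Lemma cards3 (V : finType) (a b c : V) : a != b -> a != c -> b != c -> #|[set a; b; c]| = 3.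
Proof. move=> ab ac bc; by rewrite setUC cardsU1 cards2 ab !inE negb_or eq_sym ac eq_sym bc. Qed.

Lemma codeg_le (V : finType) (E : {set {set V}}) (e : {set V}) a b c :
  is_3graph E -> a != b -> c != a -> c != b -> e = [set a; b; c] ->
  codeg E a b <= #|[set u | (u \notin e) && ([set a; b; u] \in E)]| + 1.
Proof.
move=> H3 ab ca cb He.
set A := [set u | _].
have sub : [set f in E | (a \in f) && (b \in f)] \subset (fun u => [set a; b; u]) @: (c |: A).
  apply/subsetP=> f; rewrite inE => /andP[fE /andP[af bf]].
  have sab : [set a; b] \subset f by apply/subsetP=> t; rewrite !inE => /orP[]/eqP->.
  have c1 : #|f :\: [set a; b]| == 1.
    by rewrite cardsD (setIidPr sab) H3 // cards2 ab.
  case/cards1P: c1 => u Hu.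
  have fe : f = [set a; b; u].
    by rewrite -{1}(setID f [set a; b]) (setIidPr sab) Hu.
  apply/imsetP; exists u => //.
  rewrite !inE; case: eqP => //= uc.
  have : u \in f :\: [set a; b] by rewrite Hu inE.
  rewrite !inE negb_or => /andP[/andP[ua ub] _].
  rewrite He !inE.
  rewrite (negbTE ua) (negbTE ub) -fe fE andbT /=; by apply/eqP.
rewrite /codeg; apply: leq_trans (subset_leq_card sub) _.
apply: leq_trans (leq_imset_card _ _) _.
by rewrite cardsU1 addnC leq_add2l; case: (c \in A).
Qed.
Lemma set3_231 (V : finType) (x y z : V) : [set y; z; x] = [set x; y; z].
Proof. by apply/setP=> t; rewrite !inE; case: (t == x); case: (t == y); case: (t == z). Qed.


Lemma Lbound (V : finType) (E : {set {set V}}) a b c :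
  is_3graph E -> a != b -> a != c -> b != c -> [set a; b; c] \in E ->
  codeg E a b + codeg E a c + codeg E b c <= #|V| + 2 * #|Lset E [set a; b; c]|.
Proof.
move=> H3 ab ac bc eE.
set e := [set a; b; c].
have ca : c != a by rewrite eq_sym.
have cb : c != b by rewrite eq_sym.
have ba : b != a by rewrite eq_sym.
have e2 : e = [set a; c; b] by rewrite /e set3_132.
have e3 : e = [set b; c; a] by rewrite /e -set3_231.
have h1 := @codeg_le V E e a b c H3 ab ca cb erefl.
have h2 := @codeg_le V E e a c b H3 ac ba bc e2.
have h3 := @codeg_le V E e b c a H3 bc ab ac e3.
set A1 := [set u | _ & [set a; b; u] \in E] in h1.
set A2 := [set u | _ & [set a; c; u] \in E] in h2.
set A3 := [set u | _ & [set b; c; u] \in E] in h3.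
have eE' : e = [set a; b; c] := erefl.
clearbody e.
have key : #|A1| + #|A2| + #|A3| <= #|~: e| + 2 * #|Lset E e|.
  rewrite !(card_sumb A1) !(card_sumb A2) !(card_sumb A3) (card_sumb (~: e)) (card_sumb (Lset E e)).
  rewrite big_distrr -!big_split /=; apply: leq_sum => u _.
  rewrite !in_set ?in_setC.
  case hu: (u \in e) => //=.
  have ea : a \in u |: e by rewrite eE' !inE eqxx !orbT.
  have eb : b \in u |: e by rewrite eE' !inE eqxx !orbT.
  have ec : c \in u |: e by rewrite eE' !inE eqxx !orbT.
  have eu : u \in u |: e by rewrite !inE eqxx.
  have hu' : u \notin [set a; b; c] by rewrite -eE' hu.
  move: hu'; rewrite !inE !negb_or => /andP[/andP[ua ub] uc].
  have U : forall x y z, (x == a) || (x == b) || (x == c) -> (y == a) || (y == b) || (y == c) ->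
      (z == a) || (z == b) || (z == c) -> uniq [:: x; y; z] -> uniq [:: x; y; z; u].
    move=> x y z hx hy hz Uxyz.
    rewrite -[[:: x; y; z; u]]/(rcons [:: x; y; z] u) rcons_uniq Uxyz andbT !inE !negb_or.
    by apply/and3P; split; [move: hx | move: hy | move: hz]; case/orP=> [/orP[]|] /eqP ->.
  have K12 : [set a; b; u] \in E -> [set a; c; u] \in E -> hasK4m E (u |: e).
    move=> *; apply: (@mkK4 _ _ _ a b c u) => //.
    apply: (U); rewrite ?eqxx ?orbT //= !inE negb_or ab ac bc //.
  have K13 : [set a; b; u] \in E -> [set b; c; u] \in E -> hasK4m E (u |: e).
    move=> *; apply: (@mkK4 _ _ _ b a c u) => //; try by rewrite set3_213.
    apply: (U); rewrite ?eqxx ?orbT //= !inE negb_or eq_sym ab bc ac //.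
  have K23 : [set a; c; u] \in E -> [set b; c; u] \in E -> hasK4m E (u |: e).
    move=> *; apply: (@mkK4 _ _ _ c a b u) => //; try (by rewrite set3_213); try by rewrite set3_312.
    apply: (U); rewrite ?eqxx ?orbT //= !inE negb_or eq_sym ac (eq_sym c b) bc ab //.
  move: K12 K13 K23.
  case: ([set a; b; u] \in E); case: ([set a; c; u] \in E); case: ([set b; c; u] \in E);
    case: (hasK4m E (u |: e)) => //= K12 K13 K23;
    by [ have := K12 erefl erefl | have := K13 erefl erefl | have := K23 erefl erefl ].
have ce : #|e| = 3 by rewrite eE' cards3.
have := cardsC e; rewrite ce => hC.
lia.
Qed.

Lemma card3_dec (V : finType) (e : {set V}) : #|e| = 3 ->
  exists a b c, [/\ a != b, a != c, b != c & e = [set a; b; c]].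
Proof.
move=> He.
have : 0 < #|e| by rewrite He.
case/card_gt0P=> a ae.
have : #|e :\ a| == 2 by apply/eqP; move: He; rewrite (cardsD1 a) ae /=; lia.
case/cards2P=> b [c [bc Hbc]].
have : b \in e :\ a by rewrite Hbc !inE eqxx.
have : c \in e :\ a by rewrite Hbc !inE eqxx orbT.
rewrite !inE => /andP[ca _] /andP[ba _].
exists a, b, c; split => //; try by rewrite eq_sym.
by rewrite -(setD1K ae) Hbc setUA.
Qed.

Local Open Scope ring_scope.

Lemma Lbound_R (R : realFieldType) (V : finType) (E : {set {set V}}) (n : nat) (gamma : R) e :
  #|V| = n -> is_3graph E ->
  (forall x y : V, x != y -> (1/2 - gamma) * n%:R <= (codeg E x y)%:R) ->
  e \in E -> (1/2 - 3 * gamma) * n%:R <= 2 * (#|Lset E e|)%:R.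
Proof.
move=> hn H3 Hcod eE.
have [a [b [c [ab ac bc ee]]]] := card3_dec (H3 e eE).
rewrite ee in eE *.
have := Lbound H3 ab ac bc eE; rewrite -(ler_nat R) (natrD _ #|V|) hn (GRing.natrM R 2) => hL.
have := Hcod _ _ ab; have := Hcod _ _ ac; have := Hcod _ _ bc.
move: hL; set x := (codeg E a b)%:R; set y := (codeg E a c)%:R; set z := (codeg E b c)%:R.
move=> *; lra.
Qed.

Unset Implicit Arguments.

Theorem proposition5p7 (R : realFieldType) (V : finType) (E : {set {set V}})
    (n : nat) (eps gamma : R) (v : V) :
  #|V| = n ->
  0 < eps -> eps < 1 -> 0 < gamma -> gamma < 1 ->
  is_3graph E ->
  (forall x y : V, x != y -> (1/2 - gamma) * n%:R <= (codeg E x y)%:R) ->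
  eps * n%:R ^+ 3 <= (#|[set e in E | v \in Lset E e]|)%:R ->
  (1/4 - 3 * gamma) * n%:R <= (#|closeN E 1 (gamma * eps) v|)%:R.
Proof.
move=> hn e0 e1 g0 g1 H3 Hcod Ht.
case: n hn Hcod Ht => [|n'] hn Hcod Ht; first by rewrite mulr0 ler0n.
set n := n'.+1 in hn Hcod Ht *.
set T := [set e in E | v \in Lset E e] in Ht *.
set N := closeN E 1 (gamma * eps) v.
set t : R := (#|T|)%:R in Ht.
have n0 : 0 < (n%:R : R) by rewrite ltr0n.
have t0 : 0 < t by apply: lt_le_trans Ht; rewrite mulr_gt0 // exprn_gt0.
have lo : t * ((1/2 - 3 * gamma) * n%:R / 2) <= (\sum_(e in T) #|Lset E e|)%:R.
  rewrite natr_sum.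
  have -> : t * ((1/2 - 3 * gamma) * n%:R / 2) = \sum_(e in T) ((1/2 - 3 * gamma) * n%:R / 2).
    by rewrite sumr_const /t mulr_natl.
  apply: ler_sum => e; rewrite inE => /andP[eE _].
  have := Lbound_R hn H3 Hcod eE; lra.
have up : (\sum_(y : V) #|[set e in T | y \in Lset E e]|)%:R <= t * ((#|N|)%:R + gamma * n%:R).
  rewrite natr_sum.
  apply: (@le_trans _ _ (\sum_(y : V) (t * (y \in N)%:R + t * gamma))).
    apply: ler_sum => y _.
    have P1 : (#|[set e in T | y \in Lset E e]|)%:R <= t.
      by rewrite ler_nat; apply: subset_leq_card; apply/subsetP=> e; rewrite inE => /andP[].
    case yN: (y \in N).
      rewrite mulr1; have : 0 <= t * gamma by rewrite mulr_ge0 // ltW.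
      move: P1; set p := (#|_|)%:R; lra.
    rewrite mulr0 add0r.
    have P2 : (#|[set e in T | y \in Lset E e]| <= #|[set S : {set V} | connector E 1 v y S]|)%N.
      apply: subset_leq_card; apply/subsetP=> e; rewrite !inE => /andP[/andP[eE ve] ye].
      by apply: (connector_of (H3 e eE)); rewrite inE.
    move: yN; rewrite /N /closeN inE /close => /negbT; rewrite -ltNge => hc.
    have e3 : (4 * 1).-1 = 3 by [].
    rewrite e3 hn in hc.
    apply: (@le_trans _ _ (gamma * eps * n%:R ^+ 3)).
      by apply: ltW; apply: (le_lt_trans _ hc); rewrite ler_nat.
    by rewrite -mulrA mulrC ler_wpM2r // ltW.
  rewrite big_split /= -mulr_sumr sumr_const.
  have cT : #|(xpredT : pred V)| = n by rewrite -hn.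
  rewrite -natr_sum -card_sumb cT -[t * gamma *+ n]mulr_natr.
  by rewrite mulrDr mulrA.
rewrite dcount in lo.
have H := le_trans lo up.
rewrite ler_pM2l // in H.
have gn : 0 <= gamma * n%:R by rewrite mulr_ge0 // ltW.
move: H gn; set q := (#|N|)%:R; lra.
Qed.
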